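(* Let $K\ge 2$, let $f:\mathbb{R}^3\to\mathbb{R}^K$ be an arbitrary function, and let $\mathbf{p}_1,\mathbf{p}_2\in\mathbb{R}^3$ with $\mathbf{u}_1=f(\mathbf{p}_1)$ and $\mathbf{u}_2=f(\mathbf{p}_2)$ satisfying $\min^{(1)}(\mathbf{u}_i)+\min^{(2)}(\mathbf{u}_i)\ge 0$ for $i=1,2$. Then for every $\alpha\in[0,1]$, the linearly interpolated vector $\mathbf{u}_\alpha=\alpha\mathbf{u}_1+(1-\alpha)\mathbf{u}_2$ (associated with the point $\alpha\mathbf{p}_1+(1-\alpha)\mathbf{p}_2$ on the segment joining $\mathbf{p}_1$ and $\mathbf{p}_2$) also satisfies $\min^{(1)}(\mathbf{u}_\alpha)+\min^{(2)}(\mathbf{u}_\alpha)\ge 0$.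
   Context: For a vector $\mathbf{u}\in\mathbb{R}^K$, $\min^{(n)}(\mathbf{u})$ denotes the $n$-th smallest entry of $\mathbf{u}$ (counted with multiplicity). *)

(* Defs.v *)
From mathcomp Require Import all_boot all_order all_algebra.
From mathcomp Require Import reals.
Set Implicit Arguments. Unset Strict Implicit. Unset Printing Implicit Defensive.
Import Order.TTheory GRing.Theory Num.Theory.
Local Open Scope ring_scope.

Definition entries (R : Type) (K : nat) (u : 'rV[R]_K) : seq R :=
  [seq u 0 i | i <- enum 'I_K].

(* min^(n)(u): the n-th smallest entry of u (1-indexed), counted with
   multiplicity: the (n-1)-th element of the nondecreasingly sorted list of
   entries.  Only meaningful for 1 <= n <= K. *)
Definition nth_min (R : realType) (K : nat) (n : nat) (u : 'rV[R]_K) : R :=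
  nth 0 (sort <=%R (entries u)) n.-1.

(* Main.v *)
Require Import Defs.
From mathcomp Require Import all_boot all_order all_algebra.
From mathcomp Require Import reals.
From mathcomp Require Import ring.
Import Order.TTheory GRing.Theory Num.Theory.
Local Open Scope ring_scope.

Lemma cnt (K : nat) (p : pred 'I_K) : count p (enum 'I_K) = #|p|.
Proof. rewrite -size_filter cardE; congr size; rewrite /enum_mem -filter_predI; apply: eq_filter => x /=. by rewrite andbT. Qed.

Lemma sorted_count (R : realType) (s : seq R) (x : R) (n : nat) :
  sorted <=%R s ->
  (n < count (fun y : R => (y <= x)%R) s)%N = (n < size s)%N && (nth 0 s n <= x).
Proof.
elim: s n => [|a s IH] n //= Hs.
have Hp := Hs. have Hall : all (fun y => a <= y) s.
  by apply: (order_path_min (@le_trans _ R)).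
have Hs' : sorted <=%R s by apply: (path_sorted Hs).
case: (leP a x) => Hax.
  case: n => [|m] /=; first by rewrite Hax.
  by rewrite add1n ltnS IH.
have -> : count (fun y => y <= x) s = 0%N.
  apply/eqP; rewrite -leqn0 leqNgt -has_count; apply/hasPn => y Hy.
  move/allP: Hall => /(_ y Hy) Hay; rewrite -ltNge; exact: lt_le_trans Hax Hay.
case: n => [|m] /=; first by rewrite leNgt Hax.
rewrite ltnS.
case Hm: (m < size s)%N => //=.
have Hy := mem_nth 0 Hm. move/allP: Hall => /(_ _ Hy) Hay.
by apply/esym/negbTE; rewrite -ltNge; exact: lt_le_trans Hax Hay.
Qed.

Section S.
Variables (R : realType) (K : nat).
Implicit Types u : 'rV[R]_K.

Lemma key u (x : R) n :
  (n < #|[pred i : 'I_K | (u 0 i <= x)%R]|)%N =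
  (n < K)%N && (nth 0 (sort <=%R (entries u)) n <= x).
Proof.
have EK : K = size (sort <=%R (entries u)) by rewrite size_sort size_map size_enum_ord.
set t := sort _ _.
have -> : (n < K)%N = (n < size t)%N by rewrite {1}EK.
rewrite -sorted_count; last by apply: sort_sorted; exact: le_total.
have P : perm_eq t (entries u) by rewrite /t perm_sort.
by rewrite (permP P) /entries count_map -cnt.
Qed.

Lemma charP u : (2 <= K)%N ->
  (0 <= nth_min 1 u + nth_min 2 u) <-> (forall i j : 'I_K, i != j -> 0 <= u 0 i + u 0 j).
Proof.
move=> hK; rewrite /nth_min /=.
set s := sort _ _.
split.
  move=> H0.
  suff W : forall i j : 'I_K, i != j -> u 0 i <= u 0 j -> 0 <= u 0 i + u 0 j.
    move=> i j Hij; case: (leP (u 0 i) (u 0 j)) => Hle; first exact: W.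
    rewrite addrC; apply: W; [by rewrite eq_sym | exact: ltW].
  move=> i j Hij Hle.
  have H1 : (0 < #|[pred k : 'I_K | (u 0 k <= u 0 i)%R]|)%N.
    by apply/card_gt0P; exists i; rewrite inE /=.
  have H2 : (1 < #|[pred k : 'I_K | (u 0 k <= u 0 j)%R]|)%N.
    by apply/card_gt1P; exists i, j; rewrite !inE /= Hle Hij.
  rewrite key in H1; rewrite key in H2.
  move/andP: H1 => [_ H1]; move/andP: H2 => [_ H2].
  apply: (le_trans H0); exact: lerD.
move=> H.
have H1 : (0 < #|[pred k : 'I_K | (u 0 k <= nth 0 s 0)%R]|)%N.
  by rewrite key lexx andbT; exact: ltnW.
have H2 : (1 < #|[pred k : 'I_K | (u 0 k <= nth 0 s 1)%R]|)%N.
  by rewrite key lexx andbT.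
case/card_gt0P: H1 => i; rewrite inE /= => Hi.
case/card_gt1P: H2 => k [l [Hk Hl Hkl]].
rewrite !inE /= in Hk Hl.
have [j [Hij Hj]] : exists j, i != j /\ u 0 j <= nth 0 s 1.
  case: (eqVneq i k) => [Eik|Nik]; last by exists k.
  by exists l; split => //; rewrite Eik.
apply: (le_trans (H i j Hij)); exact: lerD.
Qed.
End S.

Theorem theorem2 (R : realType) (K : nat) (hK : (2 <= K)%N)
    (f : 'rV[R]_3 -> 'rV[R]_K) (p1 p2 : 'rV[R]_3) :
  let u1 := f p1 in
  let u2 := f p2 in
  0 <= nth_min 1 u1 + nth_min 2 u1 ->
  0 <= nth_min 1 u2 + nth_min 2 u2 ->
  forall alpha : R, 0 <= alpha <= 1 ->
    let ua := alpha *: u1 + (1 - alpha) *: u2 in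
    0 <= nth_min 1 ua + nth_min 2 ua.
Proof.
move=> u1 u2 /(@charP R K _ hK) H1 /(@charP R K _ hK) H2 alpha.
move=> /andP[a0 a1] /=.
apply/(@charP R K _ hK) => i j Hij.
rewrite !mxE.
have E : alpha * u1 0 i + (1 - alpha) * u2 0 i + (alpha * u1 0 j + (1 - alpha) * u2 0 j)
   = alpha * (u1 0 i + u1 0 j) + (1 - alpha) * (u2 0 i + u2 0 j) by ring.
rewrite E; apply: addr_ge0; apply: mulr_ge0 => //; [exact: H1 | by rewrite subr_ge0 | exact: H2].
Qed.
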